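(* Let $E$ be a complex Banach lattice, $A$ the set of all positive atoms of $E$ of norm one, $E_A=A^{dd}$, $E_{A^d}=A^d$, and let $T\in Z(E)$ be such that its restriction $T_A$ to $E_A$ is compact. Then there exist $T_1,T_2\in Z(E)$ with $T_1$ compact such that $T=T_1+T_2$, the restriction of $T_1$ to $E_A$ equals $T_A$, and the restriction of $T_2$ to $E_{A^d}$ equals the restriction $T_{A^d}$ of $T$ to $E_{A^d}$. *)

(* Defs.v *)
From HB Require Import structures.
From mathcomp Require Import all_boot all_order all_algebra.
From mathcomp Require Import all_classical all_reals all_analysis.
Set Implicit Arguments. Unset Strict Implicit. Unset Printing Implicit Defensive.
Import Order.TTheory GRing.Theory Num.Theory.
Import numFieldNormedType.Exports.
Local Open Scope classical_set_scope.
Local Open Scope ring_scope.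

Section BL.
Variables (R : realType) (V : completeNormedModType R).
Variables (le : V -> V -> Prop) (sup : V -> V -> V).

Definition absv (x : V) : V := sup x (- x).
Definition infv (x y : V) : V := - sup (- x) (- y).

Record banach_lattice : Prop := {
  bl_refl : forall x, le x x;
  bl_anti : forall x y, le x y -> le y x -> x = y;
  bl_trans : forall x y z, le x y -> le y z -> le x z;
  bl_add : forall x y z, le x y -> le (x + z) (y + z);
  bl_scale : forall (c : R) x y, 0 <= c -> le x y -> le (c *: x) (c *: y);
  bl_sup_l : forall x y, le x (sup x y);
  bl_sup_r : forall x y, le y (sup x y);
  bl_sup_least : forall x y z, le x z -> le y z -> le (sup x y) z;
  bl_norm : forall x y, le (absv x) (absv y) -> `|x| <= `|y|
}.

Definition rlinear (f : V -> V) : Prop :=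
  forall (a : R) (x y : V), f (a *: x + y) = a *: f x + f y.

Definition rcenter (f : V -> V) : Prop :=
  rlinear f /\ exists c : R, forall x, le 0 x -> le (- (c *: x)) (f x) /\ le (f x) (c *: x).

Definition pos_atom (a : V) : Prop :=
  le 0 a /\ a <> 0 /\ forall x, le 0 x -> le x a -> exists c : R, x = c *: a.

Definition A_set : set V := [set a | pos_atom a /\ `|a| = 1].

Definition dcompl (S : set V) : set V :=
  [set x | forall s, S s -> infv (absv x) (absv s) = 0].

(* The complex Banach lattice E = V_C = V + iV is modelled by V * V
   (pairs (x, y) standing for x + i y).  A complex-linear operator on E is
   a pair (S, R) of real operators acting as (S + iR). *)
Definition cop := ((V -> V) * (V -> V))%type.

Definition capp (T : cop) (z : V * V) : V * V :=
  (T.1 z.1 - T.2 z.2, T.2 z.1 + T.1 z.2).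

(* Center of the complex Banach lattice: Z(E) = Z(V) + i Z(V). *)
Definition ccenter (T : cop) : Prop := rcenter T.1 /\ rcenter T.2.

Definition cx (S : set V) : set (V * V) := [set z | S z.1 /\ S z.2].

Definition bounded_cx (B : set (V * V)) : Prop :=
  exists M : R, forall z, B z -> `|z.1| <= M /\ `|z.2| <= M.

Definition compact_on (S : set (V * V)) (T : cop) : Prop :=
  forall B, B `<=` S -> bounded_cx B -> compact (closure (capp T @` B)).

Definition E_A : set (V * V) := cx (dcompl (dcompl A_set)).
Definition E_Ad : set (V * V) := cx (dcompl A_set).
End BL.

(* Main.v *)
Require Import Defs.
From HB Require Import structures.
From mathcomp Require Import all_boot all_order all_algebra.
From mathcomp Require Import all_classical all_reals all_analysis.
From mathcomp Require Import ring lra.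
From mathcomp Require finmap.
Import Order.TTheory GRing.Theory Num.Theory.
Import numFieldNormedType.Exports.
Local Open Scope classical_set_scope.
Local Open Scope ring_scope.
Set Implicit Arguments. Unset Strict Implicit. Unset Printing Implicit Defensive.

Section Lat.
Variables (R : realType) (V : completeNormedModType R).
Variables (le : V -> V -> Prop) (sup : V -> V -> V).
Hypothesis HB : banach_lattice le sup.

Local Notation "x <=v y" := (le x y) (at level 70).
Local Notation av := (absv sup).
Local Notation iv := (infv sup).

Lemma lrefl x : x <=v x. Proof. exact: (bl_refl HB). Qed.
Lemma ltr x y z : x <=v y -> y <=v z -> x <=v z. Proof. exact: (bl_trans HB). Qed.
Lemma lanti x y : x <=v y -> y <=v x -> x = y. Proof. exact: (bl_anti HB). Qed.
Lemma laddr x y z : x <=v y -> x + z <=v y + z. Proof. exact: (bl_add HB). Qed.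
Lemma laddl x y z : x <=v y -> z + x <=v z + y.
Proof. by move=> h; rewrite ![z + _]addrC; apply: laddr. Qed.
Lemma ladd2 x y u v : x <=v y -> u <=v v -> x + u <=v y + v.
Proof. by move=> h1 h2; apply: (ltr (laddr u h1)); apply: laddl. Qed.
Lemma lopp x y : x <=v y -> - y <=v - x.
Proof.
move=> h; have := laddr (- x - y) h.
by rewrite addrA subrr add0r addrCA subrr addr0.
Qed.
Lemma lsub0 x y : x <=v y -> 0 <=v y - x.
Proof. by move=> h; have := laddr (- x) h; rewrite subrr. Qed.
Lemma lsub0' x y : 0 <=v y - x -> x <=v y.
Proof. by move=> h; have := laddr x h; rewrite add0r subrK. Qed.
Lemma lscale (c : R) x y : 0 <= c -> x <=v y -> c *: x <=v c *: y.
Proof. exact: (bl_scale HB). Qed.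
Lemma lscale0 (c : R) x : 0 <= c -> 0 <=v x -> 0 <=v c *: x.
Proof. by move=> c0 h; have := lscale c0 h; rewrite scaler0. Qed.
Lemma lsupl x y : x <=v sup x y. Proof. exact: (bl_sup_l HB). Qed.
Lemma lsupr x y : y <=v sup x y. Proof. exact: (bl_sup_r HB). Qed.
Lemma lsupL x y z : x <=v z -> y <=v z -> sup x y <=v z.
Proof. exact: (bl_sup_least HB). Qed.

Lemma supC x y : sup x y = sup y x.
Proof. by apply: lanti; apply: lsupL; [apply: lsupr|apply: lsupl|apply: lsupr|apply: lsupl]. Qed.

Lemma supD x y z : sup (x + z) (y + z) = sup x y + z.
Proof.
apply: lanti.
  by apply: lsupL; apply: laddr; [apply: lsupl|apply: lsupr].
apply: lsub0'; apply: lsub0.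
have h : sup x y <=v sup (x + z) (y + z) - z.
  by apply: lsupL; rewrite -[X in X <=v _](addrK z); apply: laddr;
     [apply: lsupl|apply: lsupr].
by have := laddr z h; rewrite subrK.
Qed.

Lemma supZ (c : R) x y : 0 < c -> sup (c *: x) (c *: y) = c *: sup x y.
Proof.
move=> c0; apply: lanti.
  by apply: lsupL; apply: lscale; rewrite ?ltW //; [apply: lsupl|apply: lsupr].
have h : sup x y <=v c^-1 *: sup (c *: x) (c *: y).
  have ex : forall u : V, u = c^-1 *: (c *: u).
    by move=> u; rewrite scalerA mulVf ?lt0r_neq0 // scale1r.
  apply: lsupL; [rewrite {1}(ex x)|rewrite {1}(ex y)]; apply: lscale;
    rewrite ?invr_ge0 ?ltW //; [apply: lsupl|apply: lsupr].
by have := lscale (ltW c0) h; rewrite scalerA divff ?lt0r_neq0 // scale1r.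
Qed.

Lemma supxx x : sup x x = x.
Proof. by apply: lanti; [apply: lsupL; apply: lrefl | apply: lsupl]. Qed.

Lemma linfl x y : iv x y <=v x.
Proof. by rewrite /infv -[X in _ <=v X]opprK; apply: lopp; apply: lsupl. Qed.
Lemma linfr x y : iv x y <=v y.
Proof. by rewrite /infv -[X in _ <=v X]opprK; apply: lopp; apply: lsupr. Qed.
Lemma linfG x y z : z <=v x -> z <=v y -> z <=v iv x y.
Proof.
move=> h1 h2; rewrite /infv -[z]opprK; apply: lopp.
by apply: lsupL; apply: lopp.
Qed.
Lemma infC x y : iv x y = iv y x.
Proof. by rewrite /infv supC. Qed.
Lemma infD x y z : iv (x + z) (y + z) = iv x y + z.
Proof. by rewrite /infv !opprD supD opprD opprK. Qed.
Lemma infZ (c : R) x y : 0 < c -> iv (c *: x) (c *: y) = c *: iv x y.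
Proof. by move=> c0; rewrite /infv -!scalerN supZ // scalerN. Qed.
Lemma infxx x : iv x x = x.
Proof. by rewrite /infv supxx opprK. Qed.
Lemma linf_mono x y x' y' : x <=v x' -> y <=v y' -> iv x y <=v iv x' y'.
Proof.
move=> h1 h2; apply: linfG; [apply: ltr h1|apply: ltr h2];
  [apply: linfl|apply: linfr].
Qed.
Lemma linf_ge0 x y : 0 <=v x -> 0 <=v y -> 0 <=v iv x y.
Proof. by move=> h1 h2; apply: linfG. Qed.

Lemma labs_ge x : x <=v av x. Proof. exact: lsupl. Qed.
Lemma labs_geN x : - x <=v av x. Proof. exact: lsupr. Qed.
Lemma labsL x y : x <=v y -> - x <=v y -> av x <=v y.
Proof. exact: lsupL. Qed.
Lemma lneg0 x : 0 <=v x -> - x <=v 0.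
Proof. by move=> h; rewrite -oppr0; apply: lopp. Qed.
Lemma ldouble y : 0 <=v y + y -> 0 <=v y.
Proof.
move=> h; have h2 : (0:R) <= 2^-1 by rewrite invr_ge0.
have := lscale h2 h; rewrite scaler0 scalerDr -scalerDl.
have -> : (2^-1 + 2^-1 : R) = 1 by field.
by rewrite scale1r.
Qed.
Lemma labs_ge0 x : 0 <=v av x.
Proof.
apply: ldouble.
by have := ladd2 (labs_ge x) (labs_geN x); rewrite subrr.
Qed.
Lemma abs_pos x : 0 <=v x -> av x = x.
Proof.
move=> h; apply: lanti; last exact: labs_ge.
by apply: labsL; [apply: lrefl| apply: ltr (lneg0 h) h].
Qed.
Lemma absN x : av (- x) = av x.
Proof. by rewrite /absv opprK supC. Qed.
Lemma abs_abs x : av (av x) = av x.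
Proof. by rewrite abs_pos //; apply: labs_ge0. Qed.
Lemma abs0 : av 0 = 0.
Proof. by rewrite abs_pos //; apply: lrefl. Qed.
Lemma abs_triangle u v : av (u + v) <=v av u + av v.
Proof.
apply: labsL; first by apply: ladd2; apply: labs_ge.
by rewrite opprD; apply: ladd2; apply: labs_geN.
Qed.
Lemma abs_scale_le (c : R) u : av (c *: u) <=v `|c| *: av u.
Proof.
have [c0|c0] := leP 0 c.
  rewrite ger0_norm //; apply: labsL; first by apply: lscale => //; apply: labs_ge.
  by rewrite -scalerN; apply: lscale => //; apply: labs_geN.
rewrite ltr0_norm //; apply: labsL.
  have -> : c *: u = (- c) *: (- u) by rewrite scalerN scaleNr opprK.
  by apply: lscale; [rewrite oppr_ge0 ltW|apply: labs_geN].
by rewrite -scaleNr; apply: lscale; [rewrite oppr_ge0 ltW|apply: labs_ge].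
Qed.
Lemma norm_abs x : `|av x| = `|x|.
Proof.
apply/eqP; rewrite eq_le; apply/andP; split; apply: (bl_norm HB);
  rewrite abs_abs; apply: lrefl.
Qed.
Lemma norm_le_pos x y : 0 <=v x -> x <=v y -> `|x| <= `|y|.
Proof.
move=> h0 h; apply: (bl_norm HB); rewrite (abs_pos h0) (abs_pos (ltr h0 h)) //.
Qed.
Lemma norm_le_abs x y : av x <=v av y -> `|x| <= `|y|.
Proof. exact: (bl_norm HB). Qed.

Definition pp x := sup x 0.
Definition np x := sup (- x) 0.
Lemma pp_ge0 x : 0 <=v pp x. Proof. exact: lsupr. Qed.
Lemma np_ge0 x : 0 <=v np x. Proof. exact: lsupr. Qed.
Lemma pp_np x : pp x - np x = x.
Proof.
have E : sup (- x) 0 + x = sup x 0 by rewrite -supD addNr add0r supC.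
by rewrite /pp /np -E (addrC (sup (- x) 0)) addrK.
Qed.
Lemma pp_le_abs x : pp x <=v av x.
Proof. by apply: lsupL; [apply: labs_ge|apply: labs_ge0]. Qed.
Lemma np_le_abs x : np x <=v av x.
Proof. by apply: lsupL; [apply: labs_geN|apply: labs_ge0]. Qed.
Lemma norm_pp x : `|pp x| <= `|x|.
Proof. by apply: norm_le_abs; rewrite (abs_pos (pp_ge0 x)); apply: pp_le_abs. Qed.
Lemma norm_np x : `|np x| <= `|x|.
Proof. by apply: norm_le_abs; rewrite (abs_pos (np_ge0 x)); apply: np_le_abs. Qed.
Lemma np_pp x : np x = pp (- x). Proof. by []. Qed.

Lemma inf_add_le u v w : 0 <=v u -> 0 <=v v -> 0 <=v w ->
  iv (u + v) w <=v iv u w + iv v w.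
Proof.
move=> hu hv hw; set r := iv (u + v) w; set q := iv v w.
have h1 : r - u <=v q.
  apply: linfG.
    by apply: lsub0'; rewrite opprB addrA; apply: lsub0; rewrite addrC; apply: linfl.
  apply: (@ltr _ r _); last exact: linfr.
  by rewrite -[X in _ <=v X]addr0; apply: laddl; exact: lneg0.
have h2 : r <=v u + q by have := laddr u h1; rewrite subrK addrC.
have h3 : r <=v w + q.
  rewrite -[r]addr0; apply: ladd2; first exact: linfr.
  exact: linf_ge0.
by have := linfG h2 h3; rewrite infD.
Qed.

Lemma ideal_le (c : R) u v s : 0 <=v s -> iv (av v) s = 0 ->
  av u <=v c *: av v -> iv (av u) s = 0.
Proof.
move=> hs hv huv; apply: lanti; last by apply: linf_ge0 => //; apply: labs_ge0.
set C := `|c| + 1.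
have C0 : 0 < C by rewrite /C ltr_pwDr // normr_ge0.
have h1 : av u <=v C *: av v.
  apply: (ltr huv); apply: lsub0'; rewrite -scalerBl; apply: lscale0; last exact: labs_ge0.
  by rewrite subr_ge0 /C (le_trans (ler_norm c)) // lerDl.
have h2 : s <=v C *: s.
  apply: lsub0'; rewrite -[X in _ - X]scale1r -scalerBl; apply: lscale0 => //.
  by rewrite subr_ge0 /C lerDr normr_ge0.
by have := linf_mono h1 h2; rewrite infZ // hv scaler0.
Qed.

Lemma zH1 (u v w z : V) : (u + v) - (w + z) = (u - w) + (v - z).
Proof. by rewrite opprD addrACA. Qed.
Lemma zH2 (u v w z : V) : (u - w) - (v - z) = (u - v) - (w - z).
Proof. by rewrite !opprB addrACA [RHS]addrACA (addrC (- w)). Qed.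
Lemma zH3 (x u v : V) : (x - u) - (x - v) = v - u.
Proof. by rewrite zH2 subrr sub0r opprB. Qed.

Lemma lscale_le (c d : R) a : 0 <=v a -> c <= d -> c *: a <=v d *: a.
Proof.
by move=> ha cd; apply: lsub0'; rewrite -scalerBl; apply: lscale0; rewrite ?subr_ge0.
Qed.

Definition perp a u := iv (av u) a = 0.

Lemma perpN a u : perp a u -> perp a (- u).
Proof. by rewrite /perp absN. Qed.
Lemma perp_le (c : R) a u v : 0 <=v a -> perp a v -> av u <=v c *: av v -> perp a u.
Proof. exact: ideal_le. Qed.
Lemma perpZ (c : R) a v : 0 <=v a -> perp a v -> perp a (c *: v).
Proof. by move=> ha hv; apply: perp_le ha hv (abs_scale_le c v). Qed.
Lemma perpD a u v : 0 <=v a -> perp a u -> perp a v -> perp a (u + v).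
Proof.
move=> ha hu hv; apply: lanti; last by apply: linf_ge0 => //; apply: labs_ge0.
apply: (@ltr _ (iv (av u + av v) a)).
  by apply: linf_mono; [apply: abs_triangle|apply: lrefl].
have := inf_add_le (labs_ge0 u) (labs_ge0 v) ha.
by rewrite hu hv addr0.
Qed.
Lemma perp0 a : 0 <=v a -> perp a 0.
Proof.
move=> ha; rewrite /perp abs0; apply: lanti; first exact: linfl.
by apply: linf_ge0 => //; apply: lrefl.
Qed.
Lemma perpB a u v : 0 <=v a -> perp a u -> perp a v -> perp a (u - v).
Proof. by move=> ha hu hv; apply: perpD => //; apply: perpN. Qed.

Lemma coef_ge0 (c : R) a : 0 <=v a -> a <> 0 -> 0 <=v c *: a -> 0 <= c.
Proof.
move=> ha an0 h; rewrite leNgt; apply/negP => c0.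
have h2 : c *: a <=v 0.
  have -> : c *: a = - ((- c) *: a) by rewrite scaleNr opprK.
  by apply: lneg0; apply: lscale0 => //; rewrite oppr_ge0 ltW.
have /eqP := lanti h2 h; rewrite scaler_eq0 => /orP[/eqP c00|/eqP //].
by move: c0; rewrite c00 ltxx.
Qed.

Lemma perp_self (c : R) a : 0 <=v a -> a <> 0 -> perp a (c *: a) -> c = 0.
Proof.
move=> ha an0 hp; apply/eqP; apply: contraT => cn0.
set e := Num.min `|c| 1.
have e0 : 0 < e by rewrite /e lt_min normr_gt0 cn0 ltr01.
have h1 : e *: a <=v av (c *: a).
  have [c0|c0] := leP 0 c.
    apply: (@ltr _ (c *: a)); last exact: labs_ge.
    by apply: lscale_le => //; rewrite /e ge_min ger0_norm // lexx.
  apply: (@ltr _ ((- c) *: a)); last by rewrite scaleNr; exact: labs_geN.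
  by apply: lscale_le => //; rewrite /e ge_min ltr0_norm // lexx.
have h2 : e *: a <=v a.
  by rewrite -[X in _ <=v X]scale1r; apply: lscale_le => //; rewrite /e ge_min lexx orbT.
have := linfG h1 h2; rewrite hp => h3.
have /eqP := lanti h3 (lscale0 (ltW e0) ha).
by rewrite scaler_eq0 (negbTE (lt0r_neq0 e0)) /= => /eqP.
Qed.

Lemma atom_ge0 a : A_set le a -> 0 <=v a. Proof. by case=> [[]]. Qed.
Lemma atom_neq0 a : A_set le a -> a <> 0. Proof. by case=> [[_ []]]. Qed.
Lemma atom_norm a : A_set le a -> `|a| = 1. Proof. by case. Qed.
Lemma atom_prop a x : A_set le a -> 0 <=v x -> x <=v a -> exists c : R, x = c *: a.
Proof. by case=> [[_ [_ h]]] _; apply: h. Qed.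

Lemma atom_scaled (n : R) a y : A_set le a -> 0 < n -> 0 <=v y -> y <=v n *: a ->
  exists c : R, y = c *: a.
Proof.
move=> hA n0 h0 h1.
have [||s hs] := @atom_prop a (n^-1 *: y) hA.
- by apply: lscale0 => //; rewrite invr_ge0 ltW.
- have := lscale (_ : 0 <= n^-1) h1; rewrite scalerA mulVf ?lt0r_neq0 // scale1r.
  by apply; rewrite invr_ge0 ltW.
exists (n * s); rewrite -scalerA -hs scalerA divff ?lt0r_neq0 // scale1r //.
Qed.

Lemma decomp_pos a x : A_set le a -> 0 <=v x ->
  exists c : R, [/\ 0 <= c, c <= `|x|, 0 <=v x - c *: a & perp a (x - c *: a)].
Proof.
move=> hA hx; have ha := atom_ge0 hA; set n : R := `|x| + 1.
have n0 : 0 < n by rewrite /n ltr_pwDr // normr_ge0.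
set y := iv x (n *: a).
have y0 : 0 <=v y by apply: linf_ge0 => //; apply: lscale0 => //; rewrite ltW.
have [c yc] := atom_scaled hA n0 y0 (linfr _ _).
have c0 : 0 <= c by apply: (coef_ge0 ha (atom_neq0 hA)); rewrite -yc.
have cx : c <= `|x|.
  have := norm_le_pos y0 (linfl _ _); rewrite yc normrZ (atom_norm hA) mulr1.
  by rewrite ger0_norm.
have h1 : 0 <=v x - c *: a by rewrite -yc; apply: lsub0; apply: linfl.
have h2 : iv (x - c *: a) ((n - c) *: a) = 0.
  by rewrite scalerBl infD -/y yc subrr.
exists c; split => //.
rewrite /perp (abs_pos h1); apply: lanti; last by apply: linf_ge0.
rewrite -h2; apply: linf_mono; first exact: lrefl.
rewrite -[X in X <=v _]scale1r; apply: lscale_le => //.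
by move: cx; rewrite /n; lra.
Qed.

Lemma ex_phi a x : A_set le a -> exists c : R, `|c| <= `|x| /\ perp a (x - c *: a).
Proof.
move=> hA; have ha := atom_ge0 hA.
have [c1 [c10 c1x _ h1]] := decomp_pos hA (pp_ge0 x).
have [c2 [c20 c2x _ h2]] := decomp_pos hA (np_ge0 x).
exists (c1 - c2); split.
  have := norm_pp x; have := norm_np x; move: c1x c2x c10 c20.
  rewrite ler_norml; lra.
have -> : x - (c1 - c2) *: a = (pp x - c1 *: a) - (np x - c2 *: a).
  by rewrite -{1}(pp_np x) scalerBl zH2.
exact: perpB.
Qed.

Lemma perp_uniq a x (c d : R) : A_set le a -> perp a (x - c *: a) ->
  perp a (x - d *: a) -> c = d.
Proof.
move=> hA h1 h2; have ha := atom_ge0 hA.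
have := perpB ha h1 h2.
have -> : x - c *: a - (x - d *: a) = (d - c) *: a by rewrite scalerBl zH3.
by move/(perp_self ha (atom_neq0 hA)) => /eqP; rewrite subr_eq0 => /eqP.
Qed.

Definition phi a x : R := xget 0 [set c : R | perp a (x - c *: a)].

Lemma phi_spec a x : A_set le a -> perp a (x - phi a x *: a).
Proof.
move=> hA; have [c [_ hc]] := ex_phi x hA.
exact: (@xgetPex _ 0 [set c : R | perp a (x - c *: a)] (ex_intro _ c hc)).
Qed.
Lemma phi_eq a x c : A_set le a -> perp a (x - c *: a) -> phi a x = c.
Proof. by move=> hA h; apply: (perp_uniq hA (phi_spec x hA) h). Qed.
Lemma phi_bound a x : A_set le a -> `|phi a x| <= `|x|.
Proof. by move=> hA; have [c [hc1 hc2]] := ex_phi x hA; rewrite (phi_eq hA hc2). Qed.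
Lemma phi_lin a (k : R) x y : A_set le a ->
  phi a (k *: x + y) = k * phi a x + phi a y.
Proof.
move=> hA; have ha := atom_ge0 hA; apply: phi_eq => //.
have -> : k *: x + y - (k * phi a x + phi a y) *: a =
  k *: (x - phi a x *: a) + (y - phi a y *: a).
  by rewrite scalerDl scalerBr scalerA zH1.
by apply: perpD => //; [apply: perpZ => //|]; apply: phi_spec.
Qed.
Lemma phi_add a x y : A_set le a -> phi a (x + y) = phi a x + phi a y.
Proof. by move=> hA; rewrite -[x]scale1r phi_lin // mul1r scale1r. Qed.
Lemma phi_opp a x : A_set le a -> phi a (- x) = - phi a x.
Proof.
by move=> hA; apply: phi_eq => //; rewrite scaleNr -opprD; apply: perpN; apply: phi_spec.
Qed.
Lemma phi_sub a x y : A_set le a -> phi a (x - y) = phi a x - phi a y.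
Proof. by move=> hA; rewrite phi_add // phi_opp. Qed.
Lemma phi_scale a (k : R) x : A_set le a -> phi a (k *: x) = k * phi a x.
Proof. by move=> hA; rewrite -[k *: x]addr0 phi_lin // (_ : phi a 0 = 0) ?addr0 //;
  apply: phi_eq => //; rewrite scale0r subrr; apply: perp0; apply: atom_ge0. Qed.
Lemma phi_pos a x : A_set le a -> 0 <=v x -> 0 <= phi a x /\ 0 <=v x - phi a x *: a.
Proof.
move=> hA hx; have [c [c0 _ h1 h2]] := decomp_pos hA hx.
by rewrite (phi_eq hA h2).
Qed.
Lemma phi_perp a x : A_set le a -> perp a x -> phi a x = 0.
Proof. by move=> hA h; apply: phi_eq => //; rewrite scale0r subr0. Qed.
Lemma phi_self a : A_set le a -> phi a a = 1.
Proof.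
by move=> hA; apply: phi_eq => //; rewrite scale1r subrr; apply: perp0; apply: atom_ge0.
Qed.
Lemma atoms_disj a b : A_set le a -> A_set le b -> a <> b -> iv a b = 0.
Proof.
move=> hA hB ab; have ha := atom_ge0 hA; have hb := atom_ge0 hB.
set y := iv a b; have y0 : 0 <=v y by apply: linf_ge0.
have [s ys] := atom_prop hA y0 (linfl _ _).
have [t yt] := atom_prop hB y0 (linfr _ _).
have [s0|sn0] := eqVneq s 0; first by rewrite ys s0 scale0r.
have s0 : 0 <= s by apply: (coef_ge0 ha (atom_neq0 hA)); rewrite -ys.
have t0 : 0 <= t by apply: (coef_ge0 hb (atom_neq0 hB)); rewrite -yt.
have st : s = t.
  have := congr1 (fun v : V => `|v|) (etrans (esym ys) yt).
  by rewrite /= !normrZ (atom_norm hA) (atom_norm hB) !mulr1 !ger0_norm.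
exfalso; apply: ab; apply: (scalerI sn0); rewrite -ys yt st //.
Qed.
Lemma phi_other a b : A_set le a -> A_set le b -> a <> b -> phi b a = 0.
Proof.
move=> hA hB ab; apply: phi_perp => //.
by rewrite /perp (abs_pos (atom_ge0 hA)) (atoms_disj hA hB ab).
Qed.


Lemma le_sum (l : seq V) (F G : V -> V) :
  (forall b, b \in l -> F b <=v G b) -> \sum_(b <- l) F b <=v \sum_(b <- l) G b.
Proof.
elim: l => [|b l IH] h; first by rewrite !big_nil; apply: lrefl.
rewrite !big_cons; apply: ladd2; first by apply: h; rewrite mem_head.
by apply: IH => c hc; apply: h; rewrite in_cons hc orbT.
Qed.

Definition allA (l : seq V) := forall b, b \in l -> A_set le b.

Lemma sum_le_pos (l : seq V) x : uniq l -> allA l -> 0 <=v x ->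
  \sum_(b <- l) phi b x *: b <=v x.
Proof.
elim: l x => [|a l IH] x ul hl hx; first by rewrite big_nil.
move: ul => /= /andP[al ul].
have hA : A_set le a by apply: hl; rewrite mem_head.
have hl' : allA l by move=> b hb; apply: hl; rewrite in_cons hb orbT.
have [_ hz] := phi_pos hA hx.
have := IH _ ul hl' hz.
rewrite (eq_big_seq (fun b => phi b x *: b)); last first.
  move=> b hb; have hB := hl' b hb.
  have ab : a <> b by move=> ab; move: al; rewrite ab hb.
  by rewrite (phi_sub _ _ hB) (phi_scale _ _ hB) (phi_other hA hB ab) mulr0 subr0.
move=> h; rewrite big_cons; have := laddl (phi a x *: a) h.
by rewrite [_ + (x - _)]addrC subrK.
Qed.

Definition psum (mu : V -> R) (l : seq V) x := \sum_(b <- l) (mu b * phi b x) *: b.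

Lemma psum_lin mu l (k : R) x y : allA l ->
  psum mu l (k *: x + y) = k *: psum mu l x + psum mu l y.
Proof.
move=> hl; rewrite /psum scaler_sumr -big_split /=; apply: eq_big_seq => b hb.
by rewrite (phi_lin _ _ _ (hl b hb)) mulrDr scalerDl mulrCA scalerA.
Qed.
Lemma psum0 mu l : allA l -> psum mu l 0 = 0.
Proof.
move=> hl; rewrite /psum; apply: big1_seq => b /andP[_ hb].
have -> : phi b 0 = 0.
  by apply: phi_eq (hl b hb) _; rewrite scale0r subrr; apply: perp0; apply: atom_ge0 (hl b hb).
by rewrite mulr0 scale0r.
Qed.
Lemma psumD mu l x y : allA l -> psum mu l (x + y) = psum mu l x + psum mu l y.
Proof. by move=> hl; rewrite -{1}[x]scale1r (psum_lin mu 1 x y hl) scale1r. Qed.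
Lemma psumN mu l x : allA l -> psum mu l (- x) = - psum mu l x.
Proof.
by move=> hl; rewrite -[- x]addr0 -scaleN1r (psum_lin mu (-1) x 0 hl) psum0 // addr0 scaleN1r.
Qed.
Lemma psumB mu l x y : allA l -> psum mu l (x - y) = psum mu l x - psum mu l y.
Proof. by move=> hl; rewrite psumD // psumN. Qed.

Lemma psum_sand mu (m : R) l x : uniq l -> allA l -> 0 <= m ->
  (forall b, b \in l -> `|mu b| <= m) -> 0 <=v x ->
  psum mu l x <=v m *: x /\ - (m *: x) <=v psum mu l x.
Proof.
move=> ul hl m0 hmu hx.
have hS := sum_le_pos ul hl hx.
have E : \sum_(b <- l) (m * phi b x) *: b = m *: \sum_(b <- l) phi b x *: b.
  by rewrite scaler_sumr; apply: eq_bigr => b _; rewrite scalerA.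
split.
  apply: (@ltr _ (\sum_(b <- l) (m * phi b x) *: b)); last by rewrite E; apply: lscale.
  apply: le_sum => b hb; apply: lscale_le; first exact: atom_ge0 (hl b hb).
  have [p0 _] := phi_pos (hl b hb) hx.
  by apply: ler_wpM2r => //; apply: le_trans (hmu b hb); apply: ler_norm.
apply: (@ltr _ (\sum_(b <- l) ((- m) * phi b x) *: b)).
  have -> : \sum_(b <- l) ((- m) * phi b x) *: b = - (m *: \sum_(b <- l) phi b x *: b).
    rewrite -E -sumrN; apply: eq_bigr => b _; by rewrite mulNr scaleNr.
  by apply: lopp; apply: lscale.
apply: le_sum => b hb; apply: lscale_le; first exact: atom_ge0 (hl b hb).
have [p0 _] := phi_pos (hl b hb) hx.
apply: ler_wpM2r => //; rewrite lerNl; apply: le_trans (hmu b hb).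
by rewrite -normrN; apply: ler_norm.
Qed.

Lemma psum_norm_pos mu (m : R) l x : uniq l -> allA l -> 0 <= m ->
  (forall b, b \in l -> `|mu b| <= m) -> 0 <=v x ->
  `|psum mu l x| <= m * `|x|.
Proof.
move=> ul hl m0 hmu hx; have [h1 h2] := psum_sand ul hl m0 hmu hx.
rewrite -{1}(ger0_norm m0) -normrZ.
apply: norm_le_abs; rewrite (abs_pos (lscale0 m0 hx)); apply: labsL => //.
by rewrite -[X in _ <=v X]opprK; apply: lopp.
Qed.

Lemma psum_norm mu (m : R) l x : uniq l -> allA l -> 0 <= m ->
  (forall b, b \in l -> `|mu b| <= m) ->
  `|psum mu l x| <= m * (`|x| + `|x|).
Proof.
move=> ul hl m0 hmu; rewrite -{1}(pp_np x) psumB //.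
apply: (le_trans (ler_normB _ _)); rewrite mulrDr.
apply: lerD.
  apply: (le_trans (psum_norm_pos ul hl m0 hmu (pp_ge0 x))).
  by apply: ler_wpM2l => //; apply: norm_pp.
apply: (le_trans (psum_norm_pos ul hl m0 hmu (np_ge0 x))).
by apply: ler_wpM2l => //; apply: norm_np.
Qed.

Lemma lin0 (f : V -> V) : rlinear f -> f 0 = 0.
Proof.
move=> hf; have h := hf 1 0 0; rewrite !scale1r addr0 in h.
by have := congr1 (fun v => v - f 0) h; rewrite /= addrK subrr.
Qed.
Lemma linD (f : V -> V) x y : rlinear f -> f (x + y) = f x + f y.
Proof. by move=> hf; have := hf 1 x y; rewrite !scale1r. Qed.
Lemma linZ (f : V -> V) (k : R) x : rlinear f -> f (k *: x) = k *: f x.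
Proof. by move=> hf; have := hf k x 0; rewrite (lin0 hf) !addr0. Qed.
Lemma linN (f : V -> V) x : rlinear f -> f (- x) = - f x.
Proof. by move=> hf; rewrite -scaleN1r linZ // scaleN1r. Qed.
Lemma linB (f : V -> V) x y : rlinear f -> f (x - y) = f x - f y.
Proof. by move=> hf; rewrite linD // linN. Qed.

Definition cbound (f : V -> V) (c : R) :=
  0 < c /\ forall x, 0 <=v x -> - (c *: x) <=v f x /\ f x <=v c *: x.

Lemma center_pos f : rcenter le f -> rlinear f /\ exists c, cbound f c.
Proof.
case=> hl [c0 hc]; split => //; exists (`|c0| + 1); split.
  by rewrite ltr_pwDr // normr_ge0.
have cc : c0 <= `|c0| + 1 by rewrite (le_trans (ler_norm c0)) // lerDl.
move=> x hx; have [h1 h2] := hc x hx; split.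
  by apply: (ltr _ h1); apply: lopp; apply: lscale_le.
by apply: (ltr h2); apply: lscale_le.
Qed.

Lemma center_abs f c x : cbound f c -> 0 <=v x -> av (f x) <=v c *: av x.
Proof.
case=> c0 hc hx; have [h1 h2] := hc x hx; rewrite (abs_pos hx).
by apply: labsL => //; rewrite -[X in _ <=v X]opprK; apply: lopp.
Qed.

Definition lam (f : V -> V) a := phi a (f a).

Lemma center_atom f c a : rlinear f -> cbound f c -> A_set le a ->
  f a = lam f a *: a /\ `|lam f a| <= c.
Proof.
move=> hl [c0 hc] hA; have ha := atom_ge0 hA; have [h1 h2] := hc a ha.
have w0 : 0 <=v f a + c *: a by have := lsub0 h1; rewrite opprK.
have w1 : f a + c *: a <=v (c + c) *: a by rewrite scalerDl; apply: laddr.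
have [s hs] := atom_scaled hA (addr_gt0 c0 c0) w0 w1.
have fa : f a = (s - c) *: a by rewrite scalerBl -hs addrK.
have -> : lam f a = s - c.
  by apply: phi_eq => //; rewrite fa subrr; apply: perp0.
split => //.
have u : 0 <= c - (s - c).
  apply: (coef_ge0 ha (atom_neq0 hA)); rewrite scalerBl -fa; exact: lsub0.
have v : 0 <= (s - c) + c.
  apply: (coef_ge0 ha (atom_neq0 hA)); rewrite scalerDl -fa.
  by have := lsub0 h1; rewrite opprK.
by rewrite ler_norml; apply/andP; split; lra.
Qed.

Local Notation Ad := (dcompl sup (A_set le)).
Local Notation Add := (dcompl sup (dcompl sup (A_set le))).

Lemma abs0_eq y : av y = 0 -> y = 0.
Proof.
move=> h; apply: lanti; first by rewrite -h; apply: labs_ge.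
by rewrite -[y]opprK -oppr0; apply: lopp; rewrite -h; apply: labs_geN.
Qed.

Lemma dd_d0 y : Add y -> Ad y -> y = 0.
Proof. by move=> h1 h2; apply: abs0_eq; rewrite -[av y]infxx; apply: h1. Qed.

Lemma dcompl_ideal (S : set V) (c : R) u v : dcompl sup S v -> av u <=v c *: av v ->
  dcompl sup S u.
Proof. by move=> hv huv s hs; apply: (ideal_le (labs_ge0 s) (hv s hs) huv). Qed.

Lemma dcomplN (S : set V) x : dcompl sup S x -> dcompl sup S (- x).
Proof. by move=> h s hs; rewrite absN; apply: h. Qed.

Lemma kill_pos g c x : rlinear g -> cbound g c -> (forall a, A_set le a -> g a = 0) ->
  Add x -> g (pp x) = 0.
Proof.
move=> hl hc h0 hx; set p := pp x.
have hp : Add p.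
  apply: (dcompl_ideal (c := 1) hx); rewrite scale1r (abs_pos (pp_ge0 x)).
  exact: pp_le_abs.
have h1 : Add (g p) by apply: (dcompl_ideal hp); apply: center_abs hc (pp_ge0 x).
apply: dd_d0 => // a hA; rewrite (abs_pos (atom_ge0 hA)).
have [_ hz] := phi_pos hA (pp_ge0 x).
have -> : g p = g (p - phi a p *: a).
  by rewrite (linB _ _ hl) (linZ _ _ hl) (h0 a hA) scaler0 subr0.
apply: (perp_le (atom_ge0 hA) (phi_spec p hA)).
exact: center_abs hc hz.
Qed.

Lemma kill g c x : rlinear g -> cbound g c -> (forall a, A_set le a -> g a = 0) ->
  Add x -> g x = 0.
Proof.
move=> hl hc h0 hx; rewrite -(pp_np x) np_pp linB //.
by rewrite (kill_pos hl hc h0 hx) (kill_pos hl hc h0 (dcomplN hx)) subrr.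
Qed.

Lemma phi_Ad a x : A_set le a -> Ad x -> phi a x = 0.
Proof.
move=> hA hx; apply: phi_perp => //; rewrite /perp.
by have := hx a hA; rewrite (abs_pos (atom_ge0 hA)).
Qed.

Lemma psum_Ad mu l x : allA l -> Ad x -> psum mu l x = 0.
Proof.
move=> hl hx; rewrite /psum; apply: big1_seq => b /andP[_ hb].
by rewrite (phi_Ad (hl b hb) hx) mulr0 scale0r.
Qed.

Lemma atom_Add a : A_set le a -> Add a.
Proof. by move=> hA s hs; rewrite infC; apply: hs. Qed.
End Lat.

Section Top.
Variables (R : realType) (V : completeNormedModType R).

Lemma ultra_seq (F : set_system V) (P : V -> set V) (s : seq V) :
  UltraFilter F -> F [set z | exists2 k, k \in s & P k z] -> exists2 k, k \in s & F (P k).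
Proof.
move=> UF; elim: s => [|a s IH] h.
  have PF : ProperFilter F by apply: ultra_proper.
  by exfalso; apply: (@filter_not_empty _ F PF); apply: filterS h => z [k].
have [Fa|Fna] := in_ultra_setVsetC (P a) UF; first by exists a => //; rewrite mem_head.
have [k ks Fk] : exists2 k, k \in s & F (P k).
  apply: IH; apply: filterS (filterI h Fna) => z [[k]].
  rewrite in_cons => /orP[/eqP -> //|ks Pk] _; by exists k.
by exists k => //; rewrite in_cons ks orbT.
Qed.

Lemma tb_compact (X : set V) :
  (forall e : R, 0 < e -> exists K : set V, compact K /\
     forall y, X y -> exists2 k, K k & `|y - k| < e) -> compact (closure X).
Proof.
move=> H; rewrite compact_ultra => F UF FX.
have PF : ProperFilter F by apply: ultra_proper.
have cF : cauchy F.
  apply: cauchy_exP => e e0.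
  have e30 : 0 < e / 3 by rewrite divr_gt0.
  have [K [cK hK]] := H _ e30.
  move: cK; rewrite compact_cover => cK.
  have [D' D'K KD'] := cK V K (fun k => ball k (e / 3))
    (fun k _ => ball_open k (e / 3)) (fun k Kk => ex_intro2 K (fun i => ball i (e / 3) k) k Kk (ballxx k e30)).
  have sub : closure X `<=` [set z | exists2 k, k \in finmap.enum_fset D' & ball k e z].
    move=> z /(_ _ (nbhsx_ballx z _ e30)) [y [Xy bzy]].
    have [k' Kk' yk'] := hK y Xy.
    have [k D'k bkk'] := KD' k' Kk'.
    exists k => //.
    move: bzy bkk'; rewrite -!ball_normE /ball_ /= => h1 h2.
    have -> : k - z = (k - k') + (k' - y) + (y - z) by rewrite !addrA !subrK.
    apply: (le_lt_trans (ler_normD _ _)).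
    apply: (@lt_le_trans _ _ (e / 3 + e / 3 + e / 3)); last by rewrite le_eqVlt; apply/orP; left; apply/eqP; field.
    apply: ltrD; last by rewrite -normrN opprB.
    apply: (le_lt_trans (ler_normD _ _)); apply: ltrD => //.
    by rewrite -normrN opprB.
  have [k _ Fk] := ultra_seq UF (filterS sub FX).
  by exists k.
have cvgF : cvg F by apply: cauchy_cvg.
exists (lim F); split => //.
apply: (@closed_cvg _ _ F PF id (closure X) (@closed_closure _ X)) => //.
Qed.

Fixpoint boxs (l : seq V) (r : R) : set V :=
  match l with
  | [::] => [set 0]
  | a :: l' => [set p.1 *: a + p.2 | p in closed_ball (0 : R) r `*` boxs l' r]
  end.

Lemma boxs_compact l r : 0 < r -> compact (boxs l r).
Proof.
move=> r0; elim: l => [|a l IH] /=; first exact: compact_set1.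
apply: continuous_compact; last first.
  by apply: compact_setX => //; apply: closed_ballR_compact.
apply: continuous_subspaceT => p.
apply: cvgD; last exact: cvg_snd.
by apply: cvgZ; [exact: cvg_fst | exact: cvg_cst].
Qed.

Lemma boxs_sum l r (w : V -> R) : 0 < r -> (forall b, b \in l -> `|w b| <= r) ->
  boxs l r (\sum_(b <- l) w b *: b).
Proof.
move=> r0; elim: l => [|a l IH] h /=; first by rewrite big_nil.
rewrite big_cons; exists (w a, \sum_(b <- l) w b *: b) => //; split => /=.
  by rewrite closed_ballE // /closed_ball_ /= sub0r normrN; apply: h; rewrite mem_head.
by apply: IH => b hb; apply: h; rewrite in_cons hb orbT.
Qed.
End Top.

Lemma enum_exists (T : eqType) (P : T -> Prop) (K : nat) :
  (forall l : seq T, uniq l -> (forall a, a \in l -> P a) -> (size l <= K)%N) ->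
  exists l : seq T, [/\ uniq l, (forall a, a \in l -> P a) & (forall a, P a -> a \in l)].
Proof.
move=> hK.
suff : forall n (l : seq T), uniq l -> (forall a, a \in l -> P a) -> (K - size l <= n)%N ->
  exists l : seq T, [/\ uniq l, (forall a, a \in l -> P a) & (forall a, P a -> a \in l)].
  by move=> /(_ K [::]); apply => //; rewrite subn0.
elim=> [|n IH] l ul hl hn.
  have [all|nall] := pselect (forall a, P a -> a \in l); first by exists l.
  move/existsNP: nall => [a /not_implyP [Pa /negP nal]].
  have := hK (a :: l); rewrite /= nal ul => /(_ isT).
  have : forall b, b \in a :: l -> P b by move=> b; rewrite in_cons => /orP[/eqP -> //|]; apply: hl.
  move=> h /(_ h); move: hn; rewrite leqn0 subn_eq0 => hn h2.
  by have := leq_trans h2 hn; rewrite ltnn.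
have [all|nall] := pselect (forall a, P a -> a \in l); first by exists l.
move/existsNP: nall => [a /not_implyP [Pa /negP nal]].
apply: (IH (a :: l)); first by rewrite /= nal ul.
  by move=> b; rewrite in_cons => /orP[/eqP -> //|]; apply: hl.
rewrite /=; move: hn; rewrite subnS.
by case: (K - size l)%N.
Qed.

Section Ana.
Variables (R : realType) (V : completeNormedModType R).
Variables (le : V -> V -> Prop) (sup : V -> V -> V).
Hypothesis HB : banach_lattice le sup.

Local Notation "x <=v y" := (le x y) (at level 70).
Local Notation Ad := (dcompl sup (A_set le)).
Local Notation Add := (dcompl sup (dcompl sup (A_set le))).

Lemma np_lip y w : 0 <=v w -> `|np sup y| <= `|y - w|.
Proof.
move=> hw; apply: (norm_le_abs HB); rewrite (abs_pos HB (np_ge0 HB y)).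
apply: (lsupL HB); last exact: labs_ge0.
apply: (@ltr _ _ le sup HB _ (w - y)).
  by rewrite -[X in X <=v _]add0r; apply: (laddr HB).
by rewrite -opprB; apply: (labs_geN HB).
Qed.

Lemma closed_cone (u : nat -> V) l : (forall n, 0 <=v u n) -> u n @[n --> \oo] --> l -> 0 <=v l.
Proof.
move=> hu cu.
have h : np sup l = 0.
  apply/eqP; rewrite -normr_le0 leNgt; apply/negP => hp.
  have [N _ hN] := (cvgrPdist_lt _ _).1 cu _ hp.
  have := hN N (leqnn N); rewrite ltNge => /negP; apply.
  exact: np_lip.
by rewrite -(pp_np HB l) h subr0; apply: (pp_ge0 HB).
Qed.

Lemma psum_atom mu l a : uniq l -> allA le l -> A_set le a ->
  psum sup mu l a = if a \in l then mu a *: a else 0.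
Proof.
move=> ul hl hA; rewrite /psum.
rewrite (eq_big_seq (fun b => if b == a then mu a *: a else 0)); last first.
  move=> b hb; have [->|ba] := eqVneq b a; first by rewrite (phi_self HB hA) mulr1.
  by rewrite (phi_other HB hA (hl b hb)) ?mulr0 ?scale0r // => ab; move: ba; rewrite ab eqxx.
rewrite -big_mkcond /= -big_filter.
have [al|nal] := boolP (a \in l).
  by rewrite (filter_pred1_uniq ul al) big_seq1.
rewrite (_ : seq.filter _ l = [::]) ?big_nil //.
apply/eqP; rewrite -[_ == _]negbK -has_filter; apply/hasP => -[b hb /eqP ba].
by move: nal; rewrite -ba hb.
Qed.

Definition tbounded (g : V -> V) :=
  forall M : R, compact (closure (g @` [set x | `|x| <= M])).

Lemma real_main f : rcenter le f ->
  (forall e : R, 0 < e -> exists K : nat, forall l, uniq l ->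
     (forall a, a \in l -> A_set le a /\ e <= `|lam sup f a|) -> (size l <= K)%N) ->
  exists f1 : V -> V, [/\ rcenter le f1, (forall x, Add x -> f1 x = f x),
    (forall x, Ad x -> f1 x = 0) & tbounded f1].
Proof.
move=> hf hfin.
have [hl [c hc]] := center_pos HB hf.
have c0 : 0 < c by case: hc.
have hlam a : A_set le a -> `|lam sup f a| <= c.
  by move=> hA; have [] := center_atom HB hl hc hA.
pose eps (N : nat) : R := N.+1%:R^-1.
have eps0 N : 0 < eps N by rewrite /eps invr_gt0.
have epsle N M : (N <= M)%N -> eps M <= eps N.
  by move=> NM; rewrite /eps lef_pV2 ?posrE // ler_nat ltnS.
have hl_ex N : exists l, [/\ uniq l, (forall a, a \in l -> A_set le a /\ eps N <= `|lam sup f a|)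
    & (forall a, A_set le a /\ eps N <= `|lam sup f a| -> a \in l)].
  have [K hK] := hfin _ (eps0 N).
  by apply: (enum_exists (K := K)).
have [lN hlN] := choice hl_ex.
have uN N : uniq (lN N) by case: (hlN N).
have aN N : allA le (lN N) by move=> b hb; case: (hlN N) => _ h _; case: (h b hb).
pose S N x := psum sup (lam sup f) (lN N) x.
have tail N M x : (N <= M)%N -> `|S M x - S N x| <= eps N * (`|x| + `|x|).
  move=> NM; rewrite /S /psum (bigID (fun b => eps N <= `|lam sup f b|)) /=.
  have -> : \sum_(b <- lN M | eps N <= `|lam sup f b|) (lam sup f b * phi sup b x) *: b =
            \sum_(b <- lN N) (lam sup f b * phi sup b x) *: b.
    rewrite -big_filter; apply: perm_big; apply: uniq_perm.
    - by rewrite filter_uniq.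
    - exact: uN.
    move=> b; rewrite mem_filter; apply/andP/idP.
      by case=> h1 h2; case: (hlN N) => _ _; apply; split => //; apply: aN h2.
    move=> hb; case: (hlN N) => _ h _; have [hA hb'] := h b hb; split => //.
    by case: (hlN M) => _ _; apply; split => //; apply: le_trans hb'; apply: epsle.
  rewrite addrC addrK -big_filter.
  apply: (psum_norm HB (mu := lam sup f)).
  - by rewrite filter_uniq.
  - by move=> b; rewrite mem_filter => /andP[_ /aN].
  - exact: ltW.
  by move=> b; rewrite mem_filter => /andP[/negP h _]; apply: ltW; rewrite ltNge; apply/negP.
have cvgS x : cvgn (S ^~ x).
  apply: cauchy_cvg; apply: cauchy_exP => e e0.
  have e'0 : 0 < e / (`|x| + `|x| + 1) by rewrite divr_gt0 // ltr_pwDr // addr_ge0.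
  have [N _ hN] := near_infty_natSinv_lt (PosNum e'0).
  exists (S N x); exists N => // M /= NM.
  rewrite -ball_normE /ball_ /= -normrN opprB.
  apply: (le_lt_trans (tail _ _ _ NM)).
  have hNN := hN N (leqnn N); rewrite /= in hNN.
  apply: (@le_lt_trans _ _ ((e / (`|x| + `|x| + 1)) * (`|x| + `|x|))).
    by apply: ler_wpM2r; [rewrite addr_ge0 | apply: ltW].
  have a0 : 0 < `|x| + `|x| + 1 by rewrite ltr_pwDr // addr_ge0.
  by rewrite mulrAC ltr_pdivrMr // ltr_pM2l // ltrDl.
pose f1 x := lim (S n x @[n --> \oo]).
have f1cv x : S n x @[n --> \oo] --> f1 x := cvgS x.
have f1tail N x : `|f1 x - S N x| <= eps N * (`|x| + `|x|).
  have := @closed_cvg _ _ \oo _ (fun M => `|S M x - S N x|)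
    [set r : R | r <= eps N * (`|x| + `|x|)] (@closed_le _ (eps N * (`|x| + `|x|))); apply.
    by exists N => // M /= NM; apply: tail.
  by apply: cvg_norm; apply: cvgB => //; apply: cvg_cst.
have hsep : hausdorff_space V := @norm_hausdorff _ V.
have f1lin : rlinear f1.
  move=> k x y; apply: (cvg_lim hsep).
  have -> : (fun n => S n (k *: x + y)) = (fun n => k *: S n x + S n y).
    by apply: funext => n; rewrite /S (psum_lin HB).
  by apply: cvgD => //; apply: cvgZ => //; apply: cvg_cst.
have f1b : cbound le f1 c.
  split => // x hx.
  have hsn := fun n => @psum_sand _ _ _ _ HB (lam sup f) c (lN n) x (uN n) (aN n) (ltW c0)
    (fun b hb => hlam b (aN n b hb)) hx.
  split.
    apply: (lsub0' HB); apply: (closed_cone (u := fun n => S n x - - (c *: x))).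
      by move=> n; apply: (lsub0 HB); case: (hsn n).
    by apply: cvgB => //; apply: cvg_cst.
  apply: (lsub0' HB); apply: (closed_cone (u := fun n => c *: x - S n x)).
    by move=> n; apply: (lsub0 HB); case: (hsn n).
  by apply: cvgB => //; apply: cvg_cst.
have f1Ad x : Ad x -> f1 x = 0.
  move=> hx; apply: (cvg_lim hsep).
  apply/cvgrPdist_lt => e e0; exists 0%N => // n _ /=.
  by rewrite /S (psum_Ad HB) // subrr normr0.
have f1atom a : A_set le a -> f1 a = f a.
  move=> hA; have [fa _] := center_atom HB hl hc hA; rewrite fa.
  apply: (cvg_lim hsep); apply/cvgrPdist_lt => e e0.
  have [l0|ln0] := eqVneq (lam sup f a) 0.
    exists 0%N => // n _ /=; rewrite /S (psum_atom _ (uN n) (aN n) hA) l0 scale0r.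
    by case: ifP => _; rewrite subrr normr0.
  have la0 : 0 < `|lam sup f a| by rewrite normr_gt0.
  have [N0 _ hN0] := near_infty_natSinv_lt (PosNum la0).
  exists N0 => // n /= hn; rewrite /S (psum_atom _ (uN n) (aN n) hA).
  have -> : a \in lN n.
    case: (hlN n) => _ _; apply; split => //.
    by apply: le_trans (epsle _ _ hn) _; apply: ltW; apply: (hN0 N0 (leqnn _)).
  by rewrite subrr normr0.
exists f1; split => //.
- by split => //; case: f1b => _ h; exists c.
- move=> x hx.
  pose g x := f x - f1 x.
  have gl : rlinear g.
    move=> k u v; rewrite /g (f1lin k u v) (hl k u v) zH1 scalerBr //.
  have gb : cbound le g (c + c).
    split; first by rewrite addr_gt0.
    move=> u hu; case: hc => _ /(_ u hu) [h1 h2]; case: f1b => _ /(_ u hu) [h3 h4].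
    rewrite scalerDl /g; split.
      by rewrite opprD; apply: (ladd2 HB h1); apply: (lopp HB h4).
    by apply: (ladd2 HB h2); have := lopp HB h3; rewrite opprK.
  have := kill HB gl gb _ hx; rewrite /g => /(_ _)/eqP.
  rewrite subr_eq0 => h; apply/esym/eqP; apply: h => a hA.
  by rewrite f1atom // subrr.
move=> M; apply: tb_compact => e e0.
set M' := `|M| + 1.
have M0 : 0 < M' by rewrite /M' ltr_pwDr // normr_ge0.
have MM x : `|x| <= M -> `|x| <= M'.
  by move=> hx; apply: (le_trans hx); apply: (le_trans (ler_norm M)); rewrite /M' lerDl.
have e'0 : 0 < e / (M' + M') by rewrite divr_gt0 // addr_gt0.
have [N _ hN] := near_infty_natSinv_lt (PosNum e'0).
have hNN : eps N < e / (M' + M') := hN N (leqnn N).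
exists (boxs (lN N) (c * M')); split; first by apply: boxs_compact; rewrite mulr_gt0.
move=> y [x /= hx <-]; exists (S N x).
  apply: boxs_sum; first by rewrite mulr_gt0.
  move=> b hb; rewrite normrM; apply: ler_pM => //; first exact: hlam (aN N b hb).
  by apply: (le_trans (phi_bound HB x (aN N b hb))); apply: MM.
apply: (le_lt_trans (f1tail N x)).
apply: (@le_lt_trans _ _ (eps N * (M' + M'))).
  by apply: ler_wpM2l; [apply: ltW | apply: lerD; apply: MM].
have MM0 : 0 < M' + M' by rewrite addr_gt0.
by move: hNN; rewrite ltr_pdivlMr.
Qed.
End Ana.

Section Fin.
Variables (R : realType) (V : completeNormedModType R).
Variables (le : V -> V -> Prop) (sup : V -> V -> V).
Hypothesis HB : banach_lattice le sup.

Lemma rcenterB f f1 : rcenter le f -> rcenter le f1 -> rcenter le (fun x => f x - f1 x).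
Proof.
move=> /(center_pos HB) [hl [c hc]] /(center_pos HB) [hl1 [c1 hc1]].
split.
  by move=> k u v; rewrite (hl1 k u v) (hl k u v) zH1 scalerBr.
exists (c + c1) => u hu; case: hc => _ /(_ u hu) [h1 h2]; case: hc1 => _ /(_ u hu) [h3 h4].
rewrite scalerDl; split.
  by rewrite opprD; apply: (ladd2 HB h1); apply: (lopp HB h4).
by apply: (ladd2 HB h2); have := lopp HB h3; rewrite opprK.
Qed.

Lemma fin_from_compact (f : V -> V) (C : set V) :
  rcenter le f -> compact C -> (forall a, A_set le a -> C (f a)) ->
  forall e : R, 0 < e -> exists K : nat, forall l, uniq l ->
     (forall a, a \in l -> A_set le a /\ e <= `|lam sup f a|) -> (size l <= K)%N.
Proof.
move=> hf cC hP e e0.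
have [hl [c hc]] := center_pos HB hf.
have e20 : 0 < e / 2 by rewrite divr_gt0.
move: cC; rewrite compact_cover => cC.
have [D' _ CD'] := cC V C (fun k => ball k (e / 2))
    (fun k _ => ball_open k (e / 2))
    (fun k Ck => ex_intro2 C (fun i => ball i (e / 2) k) k Ck (ballxx k e20)).
exists (size (finmap.enum_fset D')) => l ul hl'.
pose kf a := xget (0 : V) [set k | k \in finmap.enum_fset D' /\ ball k (e / 2) (f a)].
have kfP a : a \in l -> kf a \in finmap.enum_fset D' /\ ball (kf a) (e / 2) (f a).
  move=> al; have [hA _] := hl' a al.
  have [k Dk bk] := CD' (f a) (hP a hA).
  exact: (@xgetPex _ 0 [set k | k \in finmap.enum_fset D' /\ ball k (e / 2) (f a)] (ex_intro _ k (conj Dk bk))).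
have inj : {in l &, injective kf}.
  move=> a b al bl kab; apply: contrapT => ab.
  have [hA ea] := hl' a al; have [hB _] := hl' b bl.
  have [_ ba] := kfP a al; have [_ bb] := kfP b bl; rewrite kab in ba.
  move: ba bb; rewrite -!ball_normE /ball_ /= => h1 h2.
  have h3 : `|f a - f b| < e.
    have -> : f a - f b = (kf b - f b) - (kf b - f a) by rewrite zH3.
    apply: (le_lt_trans (ler_normB _ _)).
    by rewrite (splitr e); apply: ltrD.
  have := phi_bound HB (f a - f b) hA.
  have [fa _] := center_atom HB hl hc hA; have [fb _] := center_atom HB hl hc hB.
  rewrite {1}fa {1}fb (phi_sub HB _ _ hA) (phi_scale HB _ _ hA) (phi_scale HB _ _ hA).
  rewrite (phi_self HB hA) (phi_other HB hB hA) => [|ba']; last by apply: ab.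
  rewrite mulr0 subr0 mulr1 => h4.
  by have := lt_le_trans (le_lt_trans (le_trans ea h4) h3) (lexx e); rewrite ltxx.
rewrite -(size_map kf); apply: uniq_leq_size; first by rewrite map_inj_in_uniq.
by move=> k /mapP [a al ->]; have [] := kfP a al.
Qed.
End Fin.

Unset Implicit Arguments.
Set Strict Implicit.
Theorem mainTheorem9 (R : realType) (V : completeNormedModType R)
  (le : V -> V -> Prop) (sup : V -> V -> V)
  (HBL : banach_lattice le sup)
  (T : cop V) (HT : ccenter le T)
  (HTA : compact_on (E_A le sup) T) :
  exists T1 T2 : cop V,
    ccenter le T1 /\ ccenter le T2 /\ compact_on setT T1 /\
    (forall z, capp T z = capp T1 z + capp T2 z) /\
    (forall z, E_A le sup z -> capp T1 z = capp T z) /\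
    (forall z, E_Ad le sup z -> capp T2 z = capp T z).
Proof.
case: HT => hT1 hT2.
have [l1 _] := center_pos HBL hT1; have [l2 _] := center_pos HBL hT2.
pose B0 := [set z : (V * V)%type | A_set le z.1 /\ z.2 = 0].
have dc0 (S : set V) : dcompl sup S 0.
  move=> s _; rewrite (abs0 HBL); apply: (lanti HBL); first exact: (linfl HBL).
  by apply: (linf_ge0 HBL); [apply: (lrefl HBL) | apply: (labs_ge0 HBL)].
have cB0 : compact (closure (capp T @` B0)).
  apply: HTA.
    by move=> [x y] [/= hA /= ->]; split; [apply: (atom_Add HBL) | apply: dc0].
  exists 1 => [[x y]] [/= hA /= ->]; rewrite (atom_norm hA) normr0; split => //.
have capa a : A_set le a -> capp T (a, 0) = (T.1 a, T.2 a).
  by move=> hA; rewrite /capp /= !(lin0 l1) !(lin0 l2) subr0 addr0.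
have cfst : compact (fst @` closure (capp T @` B0)).
  apply: continuous_compact => //; apply: continuous_subspaceT => p; exact: cvg_fst.
have csnd : compact (snd @` closure (capp T @` B0)).
  apply: continuous_compact => //; apply: continuous_subspaceT => p; exact: cvg_snd.
have inC a : A_set le a -> closure (capp T @` B0) (T.1 a, T.2 a).
  by move=> hA; apply: subset_closure; exists (a, 0) => //; apply: capa.
have fin1 := fin_from_compact HBL hT1 cfst (fun a hA => ex_intro2 _ _ _ (inC a hA) erefl).
have fin2 := fin_from_compact HBL hT2 csnd (fun a hA => ex_intro2 _ _ _ (inC a hA) erefl).
have [f1 [cf1 Af1 Adf1 tf1]] := real_main HBL hT1 fin1.
have [g1 [cg1 Ag1 Adg1 tg1]] := real_main HBL hT2 fin2.
exists (f1, g1), (fun x => T.1 x - f1 x, fun x => T.2 x - g1 x).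
split; first by split.
split; first by split; apply: (rcenterB HBL).
split.
  move=> B _ [M hM].
  pose K1 := closure (f1 @` [set x | `|x| <= M]).
  pose K2 := closure (g1 @` [set x | `|x| <= M]).
  pose h := fun p : ((V * V) * (V * V))%type => (p.1.1 - p.1.2, p.2.1 + p.2.2).
  have cK : compact (h @` ((K1 `*` K2) `*` (K2 `*` K1))).
    apply: continuous_compact.
      apply: continuous_subspaceT => p; apply: cvg_pair.
        by apply: cvgB; [apply: cvg_comp cvg_fst cvg_fst | apply: cvg_comp cvg_fst cvg_snd].
      by apply: cvgD; [apply: cvg_comp cvg_snd cvg_fst | apply: cvg_comp cvg_snd cvg_snd].
    by apply: compact_setX; apply: compact_setX; [apply: tf1|apply: tg1|apply: tg1|apply: tf1].
  apply: (subclosed_compact _ cK); first exact: closed_closure.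
  have clC : closed (h @` ((K1 `*` K2) `*` (K2 `*` K1))).
    by apply: compact_closed => //; apply: norm_hausdorff.
  have sub : capp (f1, g1) @` B `<=` h @` ((K1 `*` K2) `*` (K2 `*` K1)).
    move=> _ [z hz <-].
  have [h1 h2] := hM z hz.
  exists ((f1 z.1, g1 z.2), (g1 z.1, f1 z.2)) => //.
    split; split; apply: subset_closure; [by exists z.1|by exists z.2|by exists z.1|by exists z.2].
  move=> y hy; have := closureS sub hy; by rewrite -((closure_id _).1 clC).
split.
  move=> z; rewrite /capp /=.
  congr (_, _).
    by rewrite /= zH2 (addrC (f1 z.1 - g1 z.2)) subrK.
  by rewrite /= -zH1 (addrC (g1 z.1 + f1 z.2)) subrK.
split.
  by move=> z [h1 h2]; rewrite /capp /= Af1 // Af1 // Ag1 // Ag1.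
by move=> z [h1 h2]; rewrite /capp /= Adf1 // Adf1 // Adg1 // Adg1 // !subr0.
Qed.
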